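(* For every finite group $G\le\mathrm{O}(d)$ and all $z_1,\ldots,z_n\in\mathbb{R}^d$, $\tilde\alpha(\{z_i\}_{i=1}^n,G)\le\alpha(\{z_i\}_{i=1}^n,G)$.
   Context: For $x\in\mathbb{R}^d$, $[x]:=\{gx:g\in G\}$. The open Voronoi cell $V_x$ is the set of $y$ such that $x$ is the unique maximizer of $\langle p,y\rangle$ over $p\in[x]$; $Q_x:=\bigcup_{p\in[x]}V_p$. $P(G):=\{x:\mathrm{stab}_G(x)=\{\mathrm{id}\}\}$, $\mathcal{O}:=P(G)\cap\bigcap_{i=1}^nQ_{z_i}$. For $x\in\mathcal{O}$, $v_i(x)$ is the unique element of $\arg\max_{p\in[z_i]}\langle p,x\rangle$. $S(x,y):=\{q\in[y]:V_q\cap V_x\ne\varnothing\}$, and $\mathcal{F}(x,y)$ is the set of functions $f:\{1,\ldots,n\}\to[y]$ with $f(i)\in S(x,y)\cap\arg\max_{q\in[y]}\langle q,v_i(x)\rangle$ for all $i$. Define $\alpha(\{z_i\},G):=\inf_{x,y\in\mathcal{O}}\max_{f\in\mathcal{F}(x,y)}\big(\sum_{w\in S(x,y)}\lambda_{\min}(\sum_{i\in f^{-1}(w)}v_i(x)v_i(x)^\top)\big)^{1/2}$. The Voronoi characteristic is $\chi(G):=\max_{x,y\in P(G)}|S(x,y)|$, and $\tilde\alpha(\{z_i\},G):=\min_{I\subseteq\{1,\ldots,n\},\,|I|\ge n/\chi(G)}\ \min_{(g_i)_{i\in I}\in G^I}\big(\lambda_{\min}(\sum_{i\in I}(g_iz_i)(g_iz_i)^\top)\big)^{1/2}$.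 *)

(* Defs.v *)
From HB Require Import structures.
From mathcomp Require Import all_boot all_order all_algebra.
From mathcomp Require Import boolp classical_sets reals.
Set Implicit Arguments. Unset Strict Implicit. Unset Printing Implicit Defensive.
Import Order.TTheory GRing.Theory Num.Theory.
Local Open Scope ring_scope.
Local Open Scope classical_set_scope.

Section Voronoi.
Variables (R : realType) (d : nat).
Implicit Types (G : seq 'M[R]_d) (x y p q : 'cV[R]_d).

Definition dot p y : R := (p^T *m y) ord0 ord0.

Definition orbit G x : seq 'cV[R]_d := [seq g *m x | g <- G].

(* y is in the open Voronoi cell V_x: x is the unique maximizer of <p,y> over p in [x] *)
Definition voronoi G x y : Prop :=
  forall p, p \in orbit G x -> p != x -> dot p y < dot x y.

Definition inQ G z y : Prop := exists p, p \in orbit G z /\ voronoi G p y.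

Definition inP G x : Prop := forall g, g \in G -> g *m x = x -> g = 1%:M.

Definition inO n G (z : 'I_n -> 'cV[R]_d) x : Prop :=
  inP G x /\ forall i, inQ G (z i) x.

Definition argmax_orb G z x : set 'cV[R]_d :=
  [set p | p \in orbit G z /\ forall q, q \in orbit G z -> dot q x <= dot p x].

(* v_z(x): the (for x in O, unique) element of argmax_{p in [z]} <p,x> *)
Definition vsel G z x : 'cV[R]_d := xget 0 (argmax_orb G z x).

Definition Sset G x y : seq 'cV[R]_d :=
  [seq q <- undup (orbit G y) | `[< exists w, voronoi G q w /\ voronoi G x w >] ].

Definition lambda_min (A : 'M[R]_d) : R := inf [set a : R | eigenvalue A a].

Definition Ffam n G (z : 'I_n -> 'cV[R]_d) x y (f : 'I_n -> 'cV[R]_d) : Prop :=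
  forall i, f i \in Sset G x y /\ f i \in argmax_orb G y (vsel G (z i) x).

Definition Fvalue n G (z : 'I_n -> 'cV[R]_d) x y (f : 'I_n -> 'cV[R]_d) : R :=
  Num.sqrt (\sum_(w <- Sset G x y)
     lambda_min (\sum_(i | f i == w) (vsel G (z i) x *m (vsel G (z i) x)^T))).

Definition alpha n G (z : 'I_n -> 'cV[R]_d) : R :=
  inf [set r : R | exists x y, inO G z x /\ inO G z y /\
        r = sup [set s : R | exists f, Ffam G z x y f /\ s = Fvalue G z x y f]].

Definition chi G : R :=
  sup [set r : R | exists x y, inP G x /\ inP G y /\ r = (size (Sset G x y))%:R].

Definition alpha_tilde n G (z : 'I_n -> 'cV[R]_d) : R :=
  inf [set r : R | exists I : {set 'I_n}, n%:R / chi G <= (#|I|)%:R /\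
        exists g : 'I_n -> 'M[R]_d, (forall i, i \in I -> g i \in G) /\
          r = Num.sqrt (lambda_min
                (\sum_(i in I) ((g i *m z i) *m (g i *m z i)^T)))].

End Voronoi.

(* Main.v *)
Require Import Defs.
From HB Require Import structures.
From mathcomp Require Import all_boot all_order all_algebra.
From mathcomp Require Import boolp classical_sets reals.
From mathcomp Require Import lra.
Require Import Defs.
Import Order.TTheory GRing.Theory Num.Theory.
Set Implicit Arguments. Unset Strict Implicit. Unset Printing Implicit Defensive.
Local Open Scope ring_scope.

Section Aux.
Variables (R : realType) (d : nat).
Implicit Types (p q u v x y : 'cV[R]_d).

Lemma dotE p q : dot p q = \sum_j p j ord0 * q j ord0.
Proof. by rewrite /dot !mxE; apply: eq_bigr => j _; rewrite mxE. Qed.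

Lemma dotC p q : dot p q = dot q p.
Proof. by rewrite !dotE; apply: eq_bigr => j _; rewrite mulrC. Qed.

Lemma dotDl p q u : dot (p + q) u = dot p u + dot q u.
Proof. by rewrite !dotE -big_split; apply: eq_bigr => j _; rewrite !mxE mulrDl. Qed.

Lemma dotNl p u : dot (- p) u = - dot p u.
Proof. by rewrite !dotE -sumrN; apply: eq_bigr => j _; rewrite !mxE mulNr. Qed.

Lemma dotBl p q u : dot (p - q) u = dot p u - dot q u.
Proof. by rewrite dotDl dotNl. Qed.

Lemma dotZl a p u : dot (a *: p) u = a * dot p u.
Proof. by rewrite !dotE mulr_sumr; apply: eq_bigr => j _; rewrite !mxE mulrA. Qed.

Lemma dotDr p q u : dot u (p + q) = dot u p + dot u q.
Proof. by rewrite !(dotC u) dotDl. Qed.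

Lemma dotBr p q u : dot u (p - q) = dot u p - dot u q.
Proof. by rewrite !(dotC u) dotBl. Qed.

Lemma dotZr a p u : dot u (a *: p) = a * dot u p.
Proof. by rewrite !(dotC u) dotZl. Qed.

Lemma dot_mul (g : 'M[R]_d) p q : dot (g *m p) q = dot p (g^T *m q).
Proof. by rewrite /dot trmx_mul mulmxA. Qed.

Lemma dot_ge0 p : 0 <= dot p p.
Proof. by rewrite dotE; apply: sumr_ge0 => j _; rewrite -expr2 sqr_ge0. Qed.

Lemma dot_gt0 p : p != 0 -> 0 < dot p p.
Proof.
move=> hp; rewrite lt0r dot_ge0 andbT; apply: contra hp => /eqP h.
apply/eqP/matrixP => i j; rewrite (ord1 j) mxE.
have h2 : p i ord0 * p i ord0 = 0.
  apply: (@psumr_eq0P R _ xpredT (fun k => p k ord0 * p k ord0)) => //.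
    by move=> k _; rewrite -expr2 sqr_ge0.
  by rewrite -dotE.
by move/eqP: h2; rewrite mulf_eq0 orbb => /eqP.
Qed.

Lemma small_eps (s : seq (R * R)) :
  (forall ab, ab \in s -> 0 <= ab.1 /\ (ab.1 = 0 -> 0 < ab.2)) ->
  exists2 e, 0 < e & forall ab, ab \in s -> 0 < ab.1 + e * ab.2.
Proof.
elim: s => [|[a b] s IH] hs; first by exists 1 => //.
have [e e0 he] : exists2 e, 0 < e & forall ab, ab \in s -> 0 < ab.1 + e * ab.2.
  by apply: IH => ab hab; apply: hs; rewrite inE hab orbT.
have [ha hb] := hs (a, b) (mem_head _ _); rewrite /= in ha hb.
have mono : forall e', 0 < e' -> e' <= e -> forall ab, ab \in s -> 0 < ab.1 + e' * ab.2.
  move=> e' e'0 e'e ab hab; have := he _ hab.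
  have hab' : ab \in (a, b) :: s by rewrite inE hab orbT.
  have [h1 _] := hs ab hab'.
  move: (ab.1) (ab.2) h1 => a' b' h1 h2; nra.
have [a0|a0] := eqVneq a 0.
  exists e => // ab; rewrite inE => /orP [/eqP -> /=|]; last exact: he.
  by rewrite a0 add0r mulr_gt0 // hb.
have apos : 0 < a by rewrite lt0r a0 ha.
set e' := Order.min e (a / (`|b| + 1)).
have he'1 : e' <= e by rewrite ge_min lexx.
have he'2 : e' <= a / (`|b| + 1) by rewrite ge_min lexx orbT.
have he'0 : 0 < e' by rewrite lt_min e0 divr_gt0 // ltr_wpDl.
exists e' => // ab; rewrite inE => /orP [/eqP -> /=|]; last exact: mono.
have hb1 : 0 < `|b| + 1 by rewrite ltr_wpDl.
move: he'2; rewrite ler_pdivlMr // => h.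
have : - (e' * `|b|) <= e' * b.
  rewrite -mulrN ler_pM2l //.
  by have := ler_norm (- b); rewrite normrN; lra.
have : 0 <= `|b| by [].
nra.
Qed.

Lemma generic_vec (s : seq 'cV[R]_d) : (forall a, a \in s -> a != 0) ->
  exists u, forall a, a \in s -> dot a u != 0.
Proof.
elim: s => [|a s IH] hs; first by exists 0.
have [u hu] : exists u, forall b, b \in s -> dot b u != 0.
  by apply: IH => b hb; apply: hs; rewrite inE hb orbT.
have [hau|hau] := eqVneq (dot a u) 0; last first.
  by exists u => b; rewrite inE => /orP [/eqP ->|]; [|exact: hu].
have hs' : forall ab, ab \in [seq (dot b u ^+ 2, dot b u * dot b a) | b <- s] ->
    0 <= ab.1 /\ (ab.1 = 0 -> 0 < ab.2).
  move=> ab /mapP [b hb ->] /=; split; first exact: sqr_ge0.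
  by move=> /eqP; rewrite sqrf_eq0 (negbTE (hu b hb)).
have [t t0 ht] := small_eps hs'.
exists (u + t *: a) => b; rewrite inE => /orP [/eqP ->|hb].
  rewrite dotDr dotZr hau add0r mulf_neq0 //; first by rewrite gt_eqF.
  by rewrite gt_eqF // dot_gt0 // hs // mem_head.
have := ht _ (map_f (fun b => (dot b u ^+ 2, dot b u * dot b a)) hb) => /=.
rewrite dotDr dotZr => h; apply/eqP => h2.
have : dot b u * (dot b u + t * dot b a) = 0 by rewrite h2 mulr0.
move: h; set c := dot b u; set e := dot b a; move=> h h3; nra.
Qed.


Lemma argmax_seq (T : eqType) (s : seq T) (F : T -> R) : s != [::] ->
  exists2 c, c \in s & forall c', c' \in s -> F c' <= F c.
Proof.
elim: s => [//|a s IH] _.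
have [->|sn] := eqVneq s [::].
  by exists a; rewrite ?mem_head // => c'; rewrite inE => /eqP ->.
have [c hc hF] := IH sn.
have [le|lt] := lerP (F a) (F c).
  exists c; first by rewrite inE hc orbT.
  by move=> c'; rewrite inE => /orP [/eqP ->|]; [|exact: hF].
exists a; first exact: mem_head.
move=> c'; rewrite inE => /orP [/eqP ->//|/hF h]; exact: (le_trans h (ltW lt)).
Qed.


Lemma sum_const_seq (T : Type) (S : seq T) (c : R) : \sum_(w <- S) c = c *+ size S.
Proof. by elim: S => [|a S IH]; rewrite ?big_nil ?big_cons ?IH ?mulrS. Qed.

Lemma lmin_ge0 (M : 'M[R]_d) :
  (forall u : 'rV[R]_d, 0 <= (u *m M *m u^T) ord0 ord0) -> 0 <= lambda_min M.
Proof.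
move=> hM; rewrite /lambda_min.
have [->|ne] := eqVneq [set a : R | eigenvalue M a]%classic set0%classic; first by rewrite inf0.
apply: lb_le_inf; first by apply/set0P.
move=> a /= /eigenvalueP [u hu nz].
have := hM u; rewrite hu -scalemxAl mxE.
have : 0 < (u *m u^T) ord0 ord0.
  have := dot_gt0 (p := u^T); rewrite /dot trmxK => -> //.
  by apply: contra nz => /eqP h; rewrite -(trmxK u) h; apply/eqP/matrixP => i j; rewrite !mxE.
by move=> h; rewrite pmulr_lge0.
Qed.

Lemma psd_sum (I : finType) (P : pred I) (a : I -> 'cV[R]_d) (u : 'rV[R]_d) :
  0 <= (u *m (\sum_(i | P i) (a i *m (a i)^T)) *m u^T) ord0 ord0.
Proof.
rewrite mulmx_sumr mulmx_suml summxE; apply: sumr_ge0 => i _.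
rewrite mulmxA -mulmxA -trmx_mul mxE big_ord1 !mxE -expr2; exact: sqr_ge0.
Qed.

Lemma lmin0 : lambda_min (0 : 'M[R]_d) <= 0.
Proof.
rewrite /lambda_min.
have [->|ne] := eqVneq [set a : R | eigenvalue (0 : 'M[R]_d) a]%classic set0%classic; first by rewrite inf0.
have E0 : forall a, eigenvalue (0 : 'M[R]_d) a -> a = 0.
  move=> a /eigenvalueP [u hu nz]; move: hu; rewrite mulmx0 => /eqP.
  by rewrite eq_sym scaler_eq0 (negbTE nz) orbF => /eqP.
have [a ha] := (set0P _).1 ne.
have : inf [set a : R | eigenvalue (0 : 'M[R]_d) a]%classic <= a.
  by apply: ge_inf => //; exists 0 => b /E0 ->.
by rewrite (E0 a ha).
Qed.

Section Grp.
Variables (G : seq 'M[R]_d).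
Hypotheses (hG1 : 1%:M \in G)
  (hGmul : forall g h, g \in G -> h \in G -> g *m h \in G)
  (hGorth : forall g, g \in G -> g *m g^T = 1%:M).

Lemma trK g : g \in G -> g^T *m g = 1%:M.
Proof. by move=> hg; apply: mulmx1C; apply: hGorth. Qed.

Lemma G_tr g : g \in G -> g^T \in G.
Proof.
move=> hg.
have inj : {in undup G &, injective (mulmx g)}.
  move=> h1 h2 _ _ e; by rewrite -(mul1mx h1) -(mul1mx h2) -(trK hg) -!mulmxA e.
have u1 : uniq (map (mulmx g) (undup G)) by rewrite map_inj_in_uniq ?undup_uniq.
have sub : {subset map (mulmx g) (undup G) <= undup G}.
  by move=> k /mapP [h hh ->]; rewrite mem_undup hGmul // -mem_undup.
have sz : (size (undup G) <= size (map (mulmx g) (undup G)))%N by rewrite size_map.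
have [_ eq] := uniq_min_size u1 sub sz.
have : 1%:M \in map (mulmx g) (undup G) by rewrite eq mem_undup.
move=> /mapP [h hh e].
have -> : g^T = h by rewrite -(mulmx1 g^T) e mulmxA trK // mul1mx.
by rewrite -mem_undup.
Qed.

Lemma orbitP x p : reflect (exists2 g, g \in G & p = g *m x) (p \in orbit G x).
Proof. exact: mapP. Qed.

Lemma orbit_self x : x \in orbit G x.
Proof. by apply/orbitP; exists 1%:M; rewrite ?mul1mx. Qed.

Lemma orbit_nil x : orbit G x != [::].
Proof. by apply/eqP => e; have := orbit_self x; rewrite e. Qed.

Lemma dot_orth g x y : g \in G -> dot (g *m x) (g *m y) = dot x y.
Proof. by move=> hg; rewrite dot_mul mulmxA trK // mul1mx. Qed.

Lemma orbit_gt x p : p \in orbit G x -> p != x -> 0 < dot x x - dot p x.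
Proof.
move=> /orbitP [g hg ->] ne.
have := dot_gt0 (p := x - g *m x); rewrite subr_eq0 eq_sym => /(_ ne).
rewrite !dotBl !dotBr dot_orth // (dotC x (g *m x)) => h.
by move: h; lra.
Qed.

Lemma orbit_trans x p q : p \in orbit G x -> q \in orbit G p -> q \in orbit G x.
Proof.
move=> /orbitP [g hg ->] /orbitP [h hh ->]; apply/orbitP; exists (h *m g).
  exact: hGmul.
by rewrite mulmxA.
Qed.

Lemma vsel_spec z x : vsel G z x \in orbit G z /\
  forall q, q \in orbit G z -> dot q x <= dot (vsel G z x) x.
Proof.
have : argmax_orb G z x (vsel G z x).
  apply: xgetPex.
  have [q hq hF] := argmax_seq (fun q => dot q x) (orbit_nil z).
  by exists q; split.
by case.
Qed.

Lemma vsel_cell z x p : p \in orbit G x ->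
  dot p (vsel G z x) <= dot x (vsel G z x).
Proof.
move=> /orbitP [g hg ->]; have [hv hm] := vsel_spec z x.
rewrite dot_mul dotC (dotC x).
apply: hm; apply: orbit_trans hv _; apply/orbitP; exists g^T => //; exact: G_tr.
Qed.


Lemma cellB x y v : (forall p, p \in orbit G x -> dot p v <= dot x v) ->
  exists q, q \in Sset G x y /\ q \in argmax_orb G y v.
Proof.
move=> hv.
set Y := orbit G y.
have [q1 hq1 hF1] := argmax_seq (fun q => dot q v) (orbit_nil y).
set mv := dot q1 v.
set A := [seq q <- Y | dot q v == mv].
have An : A != [::].
  apply/eqP => e; have : q1 \in A by rewrite mem_filter eqxx hq1.
  by rewrite e.
have [q2 hq2 hF2] := argmax_seq (fun q => dot q x) An.
set mx := dot q2 x.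
set B := [seq q <- A | dot q x == mx].
have Bn : B != [::].
  apply/eqP => e; have : q2 \in B by rewrite mem_filter eqxx hq2.
  by rewrite e.
set D := [seq a.1 - a.2 | a <- [seq (a, b) | a <- Y, b <- Y] & a.1 != a.2].
have hD : forall a, a \in D -> a != 0.
  by move=> a /mapP [[p1 p2]]; rewrite mem_filter /= => /andP [ne _] ->; rewrite subr_eq0.
have [u0 hu0] := generic_vec hD.
have [q hq hF] := argmax_seq (fun q => dot q u0) Bn.
have hqA : q \in A by move: hq; rewrite mem_filter => /andP [].
have hqx : dot q x = mx by move: hq; rewrite mem_filter => /andP [/eqP].
have hqY : q \in Y by move: hqA; rewrite mem_filter => /andP [].
have hqv : dot q v = mv by move: hqA; rewrite mem_filter => /andP [/eqP].
have gen : forall q', q' \in Y -> q' != q -> dot q' u0 != dot q u0.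
  move=> q' hq' ne; rewrite -subr_eq0 -dotBl; apply: hu0.
  apply/mapP; exists (q', q) => //; rewrite mem_filter /= ne /=.
  by apply/allpairsP; exists (q', q).
set L1 := [seq (dot x x - dot p x, dot x u0 - dot p u0) | p <- orbit G x & p != x]
  ++ [seq (dot q x - dot q' x, dot q u0 - dot q' u0) | q' <- A & q' != q].
have hL1 : forall ab, ab \in L1 -> 0 <= ab.1 /\ (ab.1 = 0 -> 0 < ab.2).
  move=> ab; rewrite mem_cat => /orP [] /mapP [p]; rewrite mem_filter => /andP [ne hp] -> /=.
    by have h := orbit_gt hp ne; split; [exact: ltW | move=> e; move: h; rewrite e ltxx].
  split; first by rewrite subr_ge0 hqx; exact: hF2.
  move=> /eqP; rewrite subr_eq0 => /eqP e.
  have hpB : p \in B by rewrite mem_filter -e hqx eqxx /=.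
  have hpY : p \in Y by move: hp; rewrite mem_filter => /andP [].
  have := hF _ hpB; have := gen _ hpY ne; rewrite subr_gt0 lt_neqAle => -> ->.
  done.
have [t t0 ht] := small_eps hL1.
set u := x + t *: u0.
have hux : forall p, p \in orbit G x -> p != x -> 0 < dot x u - dot p u.
  move=> p hp ne.
  have := ht (dot x x - dot p x, dot x u0 - dot p u0).
  rewrite mem_cat map_f ?mem_filter ?ne //= => /(_ isT).
  by rewrite /u !dotDr !dotZr; lra.
have huq : forall q', q' \in A -> q' != q -> 0 < dot q u - dot q' u.
  move=> p hp ne.
  have := ht (dot q x - dot p x, dot q u0 - dot p u0).
  have hm : p \in [seq q' <- A | q' != q] by rewrite mem_filter ne /=.
  rewrite mem_cat (map_f (fun q' => (dot q x - dot q' x, dot q u0 - dot q' u0))) ?orbT //= => /(_ isT).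
  by rewrite /u !dotDr !dotZr; lra.
clearbody u.
set L2 := [seq (dot q v - dot q' v, dot q u - dot q' u) | q' <- Y & q' != q].
have hL2 : forall ab, ab \in L2 -> 0 <= ab.1 /\ (ab.1 = 0 -> 0 < ab.2).
  move=> ab /mapP [p]; rewrite mem_filter => /andP [ne hp] -> /=.
  split; first by rewrite subr_ge0 hqv; exact: hF1.
  move=> /eqP; rewrite subr_eq0 => /eqP e.
  by apply: huq ne; rewrite mem_filter -e hqv eqxx /=.
have [e e0 he] := small_eps hL2.
set w := v + e *: u.
exists q; split; last first.
  rewrite in_setE; split => // q' hq'; rewrite hqv; exact: hF1.
rewrite /Sset mem_filter mem_undup hqY andbT; apply/asboolP; exists w; split.
  move=> q' hq' ne.
  have hq'Y : q' \in Y := orbit_trans hqY hq'.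
  have := he (dot q v - dot q' v, dot q u - dot q' u).
  rewrite map_f ?mem_filter ?ne ?hq'Y //= => /(_ isT).
  by rewrite /w !dotDr !dotZr; lra.
move=> p hp ne.
have h1 := hv p hp; have h2 := hux p hp ne.
have h3 : 0 < e * (dot x u - dot p u) by rewrite mulr_gt0.
by rewrite /w !dotDr !dotZr; lra.
Qed.


Lemma existsO n (z : 'I_n -> 'cV[R]_d) : exists x, inO G z x.
Proof.
pose rowvec (M : 'M[R]_d) : 'cV[R]_d :=
  if [pick ij : 'I_d * 'I_d | M ij.1 ij.2 != 0] is Some ij then (row ij.1 M)^T else 0.
have rv0 : forall M x, M *m x = 0 -> dot (rowvec M) x = 0.
  move=> M x hM; rewrite /rowvec; case: pickP => [[i j] _|_]; last first.
    by rewrite dotE big1 // => k _; rewrite mxE mul0r.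
  by rewrite /dot trmxK -row_mul hM !mxE.
have rvnz : forall M, M != 0 -> rowvec M != 0.
  move=> M hM; rewrite /rowvec; case: pickP => [[i j] /= hij|hn].
    by apply/eqP => /matrixP /(_ j ord0); rewrite !mxE => h; move: hij; rewrite h eqxx.
  move: hM; case/eqP; apply/matrixP => i j; rewrite mxE.
  by have := hn (i, j); rewrite /= => /negbFE /eqP.
pose pairs (Y : seq 'cV[R]_d) :=
  [seq a.1 - a.2 | a <- [seq (a, b) | a <- Y, b <- Y] & a.1 != a.2].
have pairsP : forall Y p p', p \in Y -> p' \in Y -> p != p' -> p - p' \in pairs Y.
  move=> Y p p' hp hp' ne; apply/mapP; exists (p, p') => //.
  by rewrite mem_filter /= ne /=; apply/allpairsP; exists (p, p').
set s := [seq rowvec (g - 1%:M) | g <- G & g != 1%:M] ++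
  flatten [seq pairs (orbit G (z i)) | i <- enum 'I_n].
have hs : forall a, a \in s -> a != 0.
  move=> a; rewrite mem_cat => /orP [].
    move=> /mapP [g]; rewrite mem_filter => /andP [ne _] ->.
    by apply: rvnz; rewrite subr_eq0.
  move=> /flattenP [Y /mapP [i _ ->]] /mapP [[p p']]; rewrite mem_filter /=.
  by move=> /andP [ne _] ->; rewrite subr_eq0.
have [x hx] := generic_vec hs.
exists x; split.
  move=> g hg hgx; apply/eqP; apply: contraT => ne.
  have : rowvec (g - 1%:M) \in s.
    by rewrite mem_cat; apply/orP; left; apply/mapP; exists g; rewrite // mem_filter ne.
  move/hx; rewrite rv0 ?eqxx // mulmxBl mul1mx hgx subrr //.
move=> i.
have [p hp hF] := argmax_seq (fun q => dot q x) (orbit_nil (z i)).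
exists p; split => // p' hp' ne.
have hp'z : p' \in orbit G (z i) := orbit_trans hp hp'.
rewrite lt_neqAle hF // andbT.
have : p' - p \in s.
  rewrite mem_cat; apply/orP; right; apply/flattenP.
  exists (pairs (orbit G (z i))); first by apply/mapP; exists i; rewrite ?mem_enum.
  exact: pairsP.
by move/hx; rewrite dotBl subr_eq0.
Qed.


Lemma chi_ge x y : inP G x -> inP G y -> (size (Sset G x y))%:R <= chi G.
Proof.
move=> hx hy; apply: sup_upper_bound; last by exists x, y.
split; first by exists (size (Sset G x y))%:R, x, y.
exists (size G)%:R => r [x' [y' [_ [_ ->]]]]; rewrite ler_nat.
rewrite /Sset size_filter (leq_trans (count_size _ _)) //.
by rewrite (leq_trans (size_undup _)) // size_map.
Qed.

Lemma key n (z : 'I_n -> 'cV[R]_d) x y f : inP G x -> inP G y -> Ffam G z x y f ->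
  alpha_tilde G z <= Fvalue G z x y f.
Proof.
move=> hx hy hf.
set S := Sset G x y.
have Sle := chi_ge hx hy.
have [g hg] : {g : 'I_n -> 'M[R]_d & forall i, g i \in G /\ vsel G (z i) x = g i *m z i}.
  apply: (@choice _ _ (fun i g => g \in G /\ vsel G (z i) x = g *m z i)) => i.
  have [/orbitP [g hg e] _] := vsel_spec (z i) x.
  by exists g.
pose M w := \sum_(i | f i == w) (vsel G (z i) x *m (vsel G (z i) x)^T).
have Mge0 : forall w, 0 <= lambda_min (M w) by move=> w; apply: lmin_ge0 => u; exact: psd_sum.
have sumge0 : 0 <= \sum_(w <- S) lambda_min (M w) by apply: sumr_ge0.
have lbT : forall I : {set 'I_n}, n%:R / chi G <= (#|I|)%:R ->
    alpha_tilde G z <= Num.sqrt (lambda_min (\sum_(i in I) ((g i *m z i) *m (g i *m z i)^T))).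
  move=> I hI; apply: ge_inf.
    by exists 0 => r [J [_ [g' [_ ->]]]]; exact: sqrtr_ge0.
  by exists I; split => //; exists g; split => // i _; case: (hg i).
rewrite /Fvalue -/S.
have [n0|npos] := posnP n.
  have h0 : n%:R / chi G <= (#|(finset.set0 : {set 'I_n})|)%:R :> R by rewrite n0 mul0r cards0.
  apply: le_trans (lbT _ h0) _.
  by rewrite big_set0; apply: ler_wsqrtr; exact: le_trans lmin0 sumge0.
have f0S : f (Ordinal npos) \in S by case: (hf (Ordinal npos)).
have Sn : S != [::] by apply/eqP => e; move: f0S; rewrite e.
pose c w := (#|[set i | f i == w]|)%:R : R.
have [w hw hc] := argmax_seq c Sn.
have Suniq : uniq S by rewrite /S /Sset filter_uniq // undup_uniq.
have ncount : n%:R = \sum_(v <- S) c v.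
  have -> : n%:R = \sum_(i : 'I_n) (1 : R) by rewrite sumr_const card_ord.
  have e1 : forall v, c v = \sum_(i : 'I_n) ((f i == v)%:R : R).
    move=> v; rewrite /c -sum1dep_card natr_sum big_mkcond /=.
    by apply: eq_bigr => i _; case: (f i == v).
  under [RHS]eq_bigr do rewrite e1.
  rewrite exchange_big /=; apply: eq_bigr => i _.
  have fiS : f i \in S by case: (hf i).
  rewrite (bigD1_seq (f i)) //= eqxx big1 ?addr0 // => v; rewrite eq_sym => /negbTE ->.
  by [].
have hI : n%:R / chi G <= (#|[set i | f i == w]|)%:R.
  have chipos : 0 < chi G.
    apply: lt_le_trans Sle; rewrite ltr0n lt0n size_eq0; exact: Sn.
  rewrite ler_pdivrMr // ncount.
  apply: (@le_trans _ _ (\sum_(v <- S) c w)).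
    by rewrite big_seq [X in _ <= X]big_seq; apply: ler_sum => v hv; exact: hc.
  rewrite sum_const_seq -[c w *+ _]mulr_natr; apply: ler_wpM2l; [exact: ler0n|exact: Sle].
apply: le_trans (lbT _ hI) _; apply: ler_wsqrtr.
have -> : \sum_(i in [set i | f i == w]) ((g i *m z i) *m (g i *m z i)^T) = M w.
  rewrite /M; apply: eq_big => [i|i _]; first by rewrite inE.
  by case: (hg i) => _ <-.
rewrite (bigD1_seq w) //= lerDl; apply: sumr_ge0 => v _; exact: Mge0.
Qed.

Lemma Fbound n (z : 'I_n -> 'cV[R]_d) x y :
  has_ubound [set s | exists f, Ffam G z x y f /\ s = Fvalue G z x y f]%classic.
Proof.
set S := Sset G x y.
pose F (phi : {ffun 'I_n -> 'I_(size S).+1}) := Fvalue G z x y (fun i => nth 0 S (phi i)).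
exists (\sum_phi `|F phi|) => r [f [hf ->]].
pose phi := [ffun i => (inord (index (f i) S) : 'I_(size S).+1)].
have -> : f = (fun i => nth 0 S (phi i)).
  apply: funext => i; rewrite ffunE inordK ?nth_index //; first by case: (hf i).
  by rewrite ltnS index_size.
apply: le_trans (ler_norm _) _.
rewrite (bigD1 phi) //= lerDl; apply: sumr_ge0 => p _; exact: normr_ge0.
Qed.

End Grp.
End Aux.

Theorem corollary30 (R : realType) (d n : nat) (G : seq 'M[R]_d)
  (hG1 : 1%:M \in G)
  (hGmul : forall g h, g \in G -> h \in G -> g *m h \in G)
  (hGorth : forall g, g \in G -> g *m g^T = 1%:M)
  (z : 'I_n -> 'cV[R]_d) :
  alpha_tilde G z <= alpha G z.
Proof.
rewrite /alpha; apply: lb_le_inf.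
  have [x0 hx0] := existsO hG1 hGmul z.
  by eexists; exists x0, x0; split; [exact: hx0|split; [exact: hx0|reflexivity]].
move=> r [x [y [hx [hy ->]]]].
have [f hf] : {f : 'I_n -> 'cV[R]_d & forall i, f i \in Sset G x y /\
    f i \in argmax_orb G y (vsel G (z i) x)}.
  apply: (@choice _ _ (fun i q => q \in Sset G x y /\ q \in argmax_orb G y (vsel G (z i) x))) => i.
  apply: cellB => //; exact: vsel_cell.
apply: le_trans (key hG1 hx.1 hy.1 hf) _.
apply: sup_upper_bound; last by exists f.
split; first by exists (Fvalue G z x y f), f.
exact: Fbound.
Qed.
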